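(* Let $x,y$ be vectors in a real Hilbert space and let $p\ge1$ be an integer. If $p$ is odd or $\langle x,y\rangle\ge0$, then $$\langle x,x\rangle^p-2\langle x,y\rangle^p+\langle y,y\rangle^p\ge\frac{1}{2^{2(p-1)}}\|x-y\|^{2p}.$$ *)

(* Defs.v *)
From mathcomp Require Import all_boot all_order all_algebra.
From mathcomp Require Import all_classical all_reals all_analysis.
Import Order.TTheory GRing.Theory Num.Theory.
Import numFieldNormedType.Exports.
Local Open Scope ring_scope.

(* A real Hilbert space is a complete normed real vector space V whose norm
   is induced by an inner product.  [is_inner_product ip] says that
   ip : V -> V -> R is a symmetric, bilinear (linear in the first argument,
   hence in both by symmetry), positive definite form and that the norm of
   V is the induced one: `|x| = sqrt <x,x>.  Completeness is carried by the
   structure completeNormedModType. *)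
Definition is_inner_product (R : realType) (V : normedModType R)
    (ip : V -> V -> R) : Prop :=
  [/\ (forall x y : V, ip x y = ip y x),
      (forall (a : R) (x y z : V), ip (a *: x + y) z = a * ip x z + ip y z),
      (forall x : V, 0 <= ip x x),
      (forall x : V, ip x x = 0 -> x = 0)
    & (forall x : V, `|x| = Num.sqrt (ip x x))].

(* Main.v *)
Require Import Defs.
From mathcomp Require Import all_boot all_order all_algebra.
From mathcomp Require Import all_classical all_reals all_analysis.
From mathcomp Require Import ring lra.
Import Order.TTheory GRing.Theory Num.Theory.
Import numFieldNormedType.Exports.
Local Open Scope ring_scope.

Lemma pm_aux (R : realType) (n : nat) (u v : R) : 0 <= u -> 0 <= v ->
  (u + v) ^+ n.+1 <= 2 ^+ n * (u ^+ n.+1 + v ^+ n.+1).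
Proof.
move=> hu hv; elim: n => [|n IH]; first by rewrite !expr1 mul1r.
have hmono : 0 <= (u - v) * (u ^+ n.+1 - v ^+ n.+1).
  case: (lerP u v) => h.
    have : u ^+ n.+1 <= v ^+ n.+1 by apply: lerXn2r.
    move=> h2; apply: mulr_le0; lra.
  have : v ^+ n.+1 <= u ^+ n.+1 by apply: lerXn2r => //; lra.
  move=> h2; apply: mulr_ge0; lra.
rewrite (exprS (u + v) n.+1) (exprS 2 n).
have hU : 0 <= u ^+ n.+1 by apply: exprn_ge0.
have hV : 0 <= v ^+ n.+1 by apply: exprn_ge0.
have hq : 0 <= 2 ^+ n :> R by apply: exprn_ge0.
rewrite (exprS u n.+1) (exprS v n.+1).
move: IH hmono hU hV hq.
set U := u ^+ n.+1; set V := v ^+ n.+1; set q := 2 ^+ n; set W := (u+v) ^+ n.+1.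
move=> IH hmono hU hV hq.
have h1 : (u + v) * W <= (u + v) * (q * (U + V)) by apply: ler_wpM2l => //; lra.
have h2 : (u + v) * (U + V) <= 2 * (u * U + v * V) by nra.
have h3 : q * ((u + v) * (U + V)) <= q * (2 * (u * U + v * V)) by apply: ler_wpM2l.
nra.
Qed.

Lemma sa_aux (R : realType) (n : nat) (s w : R) : 0 <= s -> 0 <= w ->
  s ^+ n.+1 + w ^+ n.+1 <= (s + w) ^+ n.+1.
Proof.
move=> hs hw; elim: n => [|n IH]; first by rewrite !expr1.
rewrite (exprS s n.+1) (exprS w n.+1) (exprS (s + w) n.+1).
have hU : 0 <= s ^+ n.+1 by apply: exprn_ge0.
have hV : 0 <= w ^+ n.+1 by apply: exprn_ge0.
move: IH hU hV.
set U := s ^+ n.+1; set V := w ^+ n.+1; set W := (s+w) ^+ n.+1.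
move=> IH hU hV.
have h1 : (s + w) * (U + V) <= (s + w) * W by apply: ler_wpM2l => //; lra.
nra.
Qed.

Theorem lemma4 (R : realType) (V : completeNormedModType R)
  (ip : V -> V -> R) (hip : @is_inner_product R V ip)
  (x y : V) (p : nat) (hp : (1 <= p)%N)
  (hcase : odd p \/ 0 <= ip x y) :
  ip x x ^+ p - 2 * ip x y ^+ p + ip y y ^+ p
    >= `|x - y| ^+ (2 * p) / 2 ^+ (2 * (p - 1)).
Proof.
case: hip => hsym hlin hpos hdef hnorm.
have ip0 : forall z, ip 0 z = 0.
  move=> z; have := hlin 1 0 0 z; rewrite scale1r addr0 mul1r => h; lra.
have ipD : forall u v z, ip (u + v) z = ip u z + ip v z.
  by move=> u v z; have := hlin 1 u v z; rewrite scale1r mul1r.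
have ipN : forall u z, ip (- u) z = - ip u z.
  move=> u z; have := hlin (-1) u 0 z; rewrite addr0 ip0 addr0 scaleN1r.
  by rewrite mulN1r.
have ipDr : forall u v z, ip z (u + v) = ip z u + ip z v.
  by move=> u v z; rewrite hsym ipD !(hsym z).
have ipNr : forall u z, ip z (- u) = - ip z u.
  by move=> u z; rewrite hsym ipN hsym.
set a := ip x x; set b := ip y y; set c := ip x y.
have ha : 0 <= a by apply: hpos.
have hb : 0 <= b by apply: hpos.
have hd : ip (x - y) (x - y) = a - 2 * c + b.
  rewrite ipD !ipN ipDr ipDr !ipNr (hsym y x) /a /b /c; lra.
have hs : ip (x + y) (x + y) = a + 2 * c + b.
  rewrite ipD ipDr ipDr (hsym y x) /a /b /c; lra.
have hd0 : 0 <= a - 2 * c + b by rewrite -hd.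
have hs0 : 0 <= a + 2 * c + b by rewrite -hs.
rewrite exprM hnorm sqr_sqrtr; last exact: hpos.
rewrite hd.
case: p hp hcase => // k _ hcase.
rewrite subn1 /= mulnC exprM.
set q := (2 : R) ^+ k.
have hq1 : 1 <= q by rewrite /q; apply: exprn_ege1; lra.
have hq2 : 0 < q ^+ 2 by apply: exprn_gt0; lra.
rewrite ler_pdivrMr //.
have hpmab := pm_aux _ k _ _ ha hb.
have hP : 0 <= (a - 2 * c + b) ^+ k.+1 by apply: exprn_ge0.
have hap : 0 <= a ^+ k.+1 by apply: exprn_ge0.
have hbp : 0 <= b ^+ k.+1 by apply: exprn_ge0.
case: (lerP 0 c) => hc.
  have h2c : 0 <= 2 * c by lra.
  have hsa := sa_aux _ k _ _ h2c hd0.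
  have e : 2 * c + (a - 2 * c + b) = a + b by lra.
  rewrite e exprMn exprS -/q in hsa.
  move: hpmab hsa hP hap hbp; rewrite -/q.
  set P := (a - 2 * c + b) ^+ k.+1; set A := (a + b) ^+ k.+1.
  set Ap := a ^+ k.+1; set Bp := b ^+ k.+1; set C := c ^+ k.+1.
  move=> h1 h2 hP hap hbp.
  have h3 : P <= q * (Ap - 2 * C + Bp) by nra.
  have h4 : 0 <= Ap - 2 * C + Bp by nra.
  rewrite expr2; nra.
have hodd : odd k.+1 by case: hcase => // h; exfalso; rewrite -/c in h; lra.
have hAb : 0 <= a + b by lra.
have h2c : 0 <= - (2 * c) by lra.
have hpm2 := pm_aux _ k _ _ hAb h2c.
have e : a + b + - (2 * c) = a - 2 * c + b by lra.
rewrite e exprNn -signr_odd hodd expr1 exprMn (exprS 2 k) -/q in hpm2.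
move: hpmab hpm2 hP hap hbp; rewrite -/q.
set P := (a - 2 * c + b) ^+ k.+1; set A := (a + b) ^+ k.+1.
set Ap := a ^+ k.+1; set Bp := b ^+ k.+1; set C := c ^+ k.+1.
move=> h1 h2 hP hap hbp.
have hq0 : 0 <= q by lra.
have h3 : q * A <= q * (q * (Ap + Bp)) by apply: ler_wpM2l.
have e1 : q * (A + -1 * (2 * q * C)) = q * A - 2 * (q * q * C) by ring.
have e2 : (Ap - 2 * C + Bp) * q ^+ 2 = q * (q * (Ap + Bp)) - 2 * (q * q * C).
  by rewrite expr2; ring.
rewrite e2; rewrite e1 in h2.
move: h2 h3; set X := q * A; set Y := q * (q * (Ap + Bp)); set Z := q * q * C.
move=> h2 h3; lra.
Qed.
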